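(* Let $\Gamma$ be a relational structure with domain $\mathbb{Q}.\mathbb{Z}$ whose relations are first-order definable in $(\mathbb{Q}.\mathbb{Z};\mathrm{suc})$ and which contains $\mathrm{suc}$ among its relations. The following are equivalent: (1) every reduced DNF formula defining a relation of $\Gamma$ over $(\mathbb{Q}.\mathbb{Z};\mathrm{suc})$ is positive; (2) $\Gamma$ has an endomorphism $e$ and elements $a,b$ lying in different copies of $\mathbb{Z}$ such that $e(a),e(b)$ lie in the same copy of $\mathbb{Z}$; (3) $\Gamma$ does not primitive positively define a non-trivial binary relation with infinite distance degree.
   Context: $\mathbb{Q}.\mathbb{Z}=\mathbb{Q}\times\mathbb{Z}$ with lexicographic order; its copies of $\mathbb{Z}$ are the sets $\{a\}\times\mathbb{Z}$; $(a,z)+k=(a,z+k)$. $\mathrm{suc}^p=\{(x,x+p)\}$ for $p\in\mathbb{Z}$ and $\mathrm{suc}=\mathrm{suc}^1$. Relations first-order definable in $(\mathbb{Q}.\mathbb{Z};\mathrm{suc})$ have quantifier-free definitions using literals $\mathrm{suc}^p(x,y)$ and their negations. A DNF formula over such literals is reduced if removing any literal or any disjunct yields a formula not equivalent to it over $(\mathbb{Q}.\mathbb{Z};\mathrm{suc})$, and positive if it contains no negated literals. A binary relation first-order definable in $(\mathbb{Q}.\mathbb{Z};\mathrm{suc})$ is trivial if it is primitive positive definable in $(\mathbb{Q}.\mathbb{Z};\mathrm{suc})$, non-trivial otherwise. Its distance degree is the supremum of $|x-y|$ over pairs $(x,y)$ in the relation with $x,y$ in the same copy of $\mathbb{Z}$;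 it is infinite if this supremum is $\infty$. *)

(* Defs.v *)
From HB Require Import structures.
From mathcomp Require Import all_boot all_order all_algebra.
Set Implicit Arguments. Unset Strict Implicit. Unset Printing Implicit Defensive.
Import Order.TTheory GRing.Theory Num.Theory.

(* The domain Q.Z = Q x Z; copies of Z are the fibres {a} x Z. *)
Definition QZ : Type := (rat * int)%type.

Definition sucp (p : int) (x y : QZ) : bool :=
  (x.1 == y.1) && (y.2 == (x.2 + p)%R).

Definition same_copy (x y : QZ) : Prop := x.1 = y.1.

Definition upd (v : nat -> QZ) (x : nat) (a : QZ) : nat -> QZ :=
  fun k => if k == x then a else v k.

Inductive fo : Type :=
| FSuc of nat & nat
| FEq of nat & nat
| FTrue
| FNot of fo
| FAnd of fo & fo
| FOr of fo & fo
| FEx of nat & fo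
| FAll of nat & fo.

Fixpoint fo_holds (v : nat -> QZ) (f : fo) : Prop :=
  match f with
  | FSuc i j => sucp 1 (v i) (v j)
  | FEq i j => v i = v j
  | FTrue => True
  | FNot g => ~ fo_holds v g
  | FAnd g h => fo_holds v g /\ fo_holds v h
  | FOr g h => fo_holds v g \/ fo_holds v h
  | FEx x g => exists a, fo_holds (upd v x a) g
  | FAll x g => forall a, fo_holds (upd v x a) g
  end.

(* An n-ary relation (a predicate on tuples represented as sequences) is
   first-order definable in (Q.Z; suc): some formula with free variables
   among x_0..x_{n-1} defines it (no parameters: the equivalence holds for
   every valuation). *)
Definition fo_definable (n : nat) (R : seq QZ -> Prop) : Prop :=
  exists f : fo, forall v : nat -> QZ, R (mkseq v n) <-> fo_holds v f.

Record structure := Structure {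
  sym : Type;
  arity : sym -> nat;
  relof : sym -> seq QZ -> Prop;
  relof_size : forall i s, relof i s -> size s = arity i
}.

Definition suc_rel (s : seq QZ) : Prop :=
  exists x y, s = [:: x; y] /\ sucp 1 x y.

Lemma suc_rel_size (i : unit) s : suc_rel s -> size s = 2.
Proof. by case=> x [y [-> _]]. Qed.

Definition QZsuc : structure :=
  @Structure unit (fun _ => 2) (fun _ => suc_rel) suc_rel_size.

Definition endomorphism (G : structure) (e : QZ -> QZ) : Prop :=
  forall (i : sym G) (s : seq QZ), relof i s -> relof i (map e s).

Inductive ppf (G : structure) : Type :=
| PRel of sym G & seq nat
| PEq of nat & nat
| PTrue
| PAnd of ppf G & ppf G
| PEx of nat & ppf G.

Fixpoint pp_holds (G : structure) (v : nat -> QZ) (f : ppf G) : Prop :=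
  match f with
  | PRel i xs => relof i (map v xs)
  | PEq i j => v i = v j
  | PTrue => True
  | PAnd g h => pp_holds v g /\ pp_holds v h
  | PEx x g => exists a, pp_holds (upd v x a) g
  end.

Definition pp_definable2 (G : structure) (R : QZ -> QZ -> Prop) : Prop :=
  exists f : ppf G, forall v : nat -> QZ, R (v 0%N) (v 1%N) <-> pp_holds v f.

Definition fo_definable2 (R : QZ -> QZ -> Prop) : Prop :=
  fo_definable 2 (fun s => R (nth (0, 0)%R s 0) (nth (0, 0)%R s 1)).

Definition trivial2 (R : QZ -> QZ -> Prop) : Prop := pp_definable2 QZsuc R.
Definition nontrivial2 (R : QZ -> QZ -> Prop) : Prop :=
  fo_definable2 R /\ ~ trivial2 R.

Definition infinite_distance_degree (R : QZ -> QZ -> Prop) : Prop :=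
  forall N : nat, exists x y : QZ,
    R x y /\ same_copy x y /\ (N < `|(y.2 - x.2)%R|)%N.

(* literal (i, j, p, b): suc^p(x_i, x_j) if b = true, its negation if false *)
Definition literal : Type := (nat * nat * int * bool)%type.
Definition clause : Type := seq literal.
Definition dnf : Type := seq clause.

Definition lit_holds (v : nat -> QZ) (l : literal) : bool :=
  let: (i, j, p, b) := l in sucp p (v i) (v j) == b.
Definition clause_holds (v : nat -> QZ) (c : clause) : bool :=
  all (lit_holds v) c.
Definition dnf_holds (v : nat -> QZ) (d : dnf) : bool :=
  has (clause_holds v) d.

Definition dnf_equiv (d1 d2 : dnf) : Prop :=
  forall v : nat -> QZ, dnf_holds v d1 = dnf_holds v d2.

Definition dnf_vars_lt (n : nat) (d : dnf) : bool :=
  all (fun c => all (fun l : literal =>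
         let: (i, j, _, _) := l in (i < n) && (j < n))%N c) d.

Definition dnf_defines (n : nat) (R : seq QZ -> Prop) (d : dnf) : Prop :=
  dnf_vars_lt n d /\ forall v : nat -> QZ, R (mkseq v n) <-> dnf_holds v d.

Definition del_nth {T : Type} (s : seq T) (k : nat) : seq T :=
  take k s ++ drop k.+1 s.

Definition del_lit (d : dnf) (k l : nat) : dnf :=
  set_nth [::] d k (del_nth (nth [::] d k) l).

Definition reduced (d : dnf) : Prop :=
  (forall k, (k < size d)%N -> ~ dnf_equiv (del_nth d k) d) /\
  (forall k l, (k < size d)%N -> (l < size (nth [::] d k))%N ->
     ~ dnf_equiv (del_lit d k l) d).

Definition positive (d : dnf) : bool :=
  all (fun c => all (fun l : literal => l.2) c) d.

(* Main.v *)
Require Import Defs.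
From HB Require Import structures.
From mathcomp Require Import all_boot all_order all_algebra.
From mathcomp Require Import zify ring lra.
From Stdlib Require Import Classical FunctionalExtensionality.
Import Order.TTheory GRing.Theory Num.Theory.
Set Implicit Arguments. Unset Strict Implicit. Unset Printing Implicit Defensive.

Section Helpers.
Local Open Scope ring_scope.

Definition sucendo (h : QZ -> QZ) := forall x y, sucp 1 x y -> sucp 1 (h x) (h y).

Lemma sucp_sym p (x y : QZ) : sucp p x y = sucp (- p) y x.
Proof.
rewrite /sucp eq_sym; congr andb.
by apply/idP/idP => /eqP H; apply/eqP; lia.
Qed.

Lemma sucp_refl p (x : QZ) : sucp p x x = (p == 0).
Proof. rewrite /sucp eqxx /=; apply/idP/idP => /eqP H; apply/eqP; lia. Qed.

Lemma sucp_shiftl p r (c d : QZ) : sucp p (c.1, c.2 + r) d = sucp (p + r) c d.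
Proof. rewrite /sucp /=; congr andb; by apply/idP/idP => /eqP H; apply/eqP; lia. Qed.

Lemma sucp0 (a b : QZ) : sucp 0 a b = (a == b).
Proof.
case: a b => [a1 a2] [b1 b2]; rewrite /sucp /= addr0 xpair_eqE.
by congr andb; rewrite eq_sym.
Qed.

Definition eqL (N : nat) (X : seq nat) (v w : nat -> QZ) :=
  forall i j, i \in X -> j \in X -> forall p : int, (absz p <= N)%N ->
    sucp p (v i) (v j) = sucp p (w i) (w j).

Lemma eqL_sym N X v w : eqL N X v w -> eqL N X w v.
Proof. by move=> H i j Hi Hj p Hp; rewrite H. Qed.

Lemma eqL_mono N N' X X' v w : eqL N X v w -> (N' <= N)%N -> {subset X' <= X} ->
  eqL N' X' v w.
Proof.
move=> H HN HX i j Hi Hj p Hp; apply: H; try exact: HX.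
exact: leq_trans Hp HN.
Qed.

Lemma fresh_rat (L : seq rat) : exists F : rat, F \notin L.
Proof.
suff [F [F0 HF]] : exists F : rat, 0 <= F /\ forall x, x \in L -> x < F.
  exists F; apply/negP => /HF; by rewrite ltxx.
elim: L => [|x L [F [F0 HF]]]; first by exists 0; split.
exists (F + `|x| + 1); split.
  have := normr_ge0 x; lra.
move=> y; rewrite inE => /orP [/eqP ->|/HF Hy].
  have := ler_norm x; lra.
have := normr_ge0 x; lra.
Qed.

Lemma ext_step N X x (v w : nat -> QZ) (a : QZ) :
  eqL (N + N) (x :: X) v w ->
  exists b, eqL N (x :: X) (upd v x a) (upd w x b).
Proof.
move=> H.
case: (classic (exists y, [/\ y \in X, y != x, (v y).1 = a.1 &
          (absz (a.2 - (v y).2) <= N)%N])).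
- move=> [y [Hy Hyx Hc Hd]].
  set r := a.2 - (v y).2.
  exists ((w y).1, (w y).2 + r).
  have Ha : a = ((v y).1, (v y).2 + r).
    by rewrite /r; move: Hc; case: a {Hd r} => a1 a2 /= ->; congr pair; ring.
  have key : forall j, j \in x :: X -> j != x -> forall p, (absz p <= N)%N ->
     sucp p a (v j) = sucp p ((w y).1, (w y).2 + r) (w j).
    move=> j Hj Hjx p Hp; rewrite Ha !sucp_shiftl; apply: H.
    - by rewrite inE Hy orbT.
    - done.
    - rewrite /r; lia.
  move=> i j Hi Hj p Hp; rewrite /upd.
  case: (eqVneq i x) => Hix; case: (eqVneq j x) => Hjx.
  + by rewrite !sucp_refl.
  + exact: key.
  + rewrite sucp_sym [in RHS]sucp_sym; apply: key => //; lia.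
  + apply: H => //; lia.
- move=> Hno.
  have [F HF] := fresh_rat [seq (w y).1 | y <- X].
  exists (F, 0).
  have key : forall j, j \in x :: X -> j != x -> forall p, (absz p <= N)%N ->
     sucp p a (v j) = sucp p (F, 0) (w j).
    move=> j Hj Hjx p Hp.
    have HjX : j \in X by move: Hj; rewrite inE (negbTE Hjx).
    transitivity false; last first.
      rewrite /sucp /=; case: eqP => // E; move: HF.
      by rewrite E (map_f (fun y => (w y).1) HjX).
    apply/negbTE/negP => /andP [/eqP E1 /eqP E2]; apply: Hno.
    exists j; split => //; rewrite E2; lia.
  move=> i j Hi Hj p Hp; rewrite /upd.
  case: (eqVneq i x) => Hix; case: (eqVneq j x) => Hjx.
  + by rewrite !sucp_refl.
  + exact: key.
  + rewrite sucp_sym [in RHS]sucp_sym; apply: key => //; lia.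
  + apply: H => //; lia.
Qed.

Fixpoint fvars (f : fo) : seq nat :=
  match f with
  | FSuc i j | FEq i j => [:: i; j]
  | FTrue => [::]
  | FNot g => fvars g
  | FAnd g h | FOr g h => fvars g ++ fvars h
  | FEx x g | FAll x g => x :: fvars g
  end.

Lemma fo_local f : exists N, forall v w, eqL N (fvars f) v w ->
  (fo_holds v f <-> fo_holds w f).
Proof.
elim: f => /=.
- move=> i j; exists 1%N => v w H.
  by rewrite H ?inE ?eqxx ?orbT.
- move=> i j; exists 0%N => v w H.
  have := H i j; rewrite !inE !eqxx orbT /= => /(_ isT isT 0 (leqnn _)).
  rewrite !sucp0 => E; split => Hv; apply/eqP; [rewrite -E | rewrite E]; exact/eqP.
- by exists 0%N.
- move=> g [N IH]; exists N => v w H; have := IH v w H; tauto.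
- move=> g [N1 IH1] h [N2 IH2]; exists (maxn N1 N2) => v w H.
  have s1 : {subset fvars g <= fvars g ++ fvars h} by move=> z Hz; rewrite mem_cat Hz.
  have s2 : {subset fvars h <= fvars g ++ fvars h} by move=> z Hz; rewrite mem_cat Hz orbT.
  have H1 := IH1 v w (eqL_mono H (leq_maxl _ _) s1).
  have H2 := IH2 v w (eqL_mono H (leq_maxr _ _) s2).
  tauto.
- move=> g [N1 IH1] h [N2 IH2]; exists (maxn N1 N2) => v w H.
  have s1 : {subset fvars g <= fvars g ++ fvars h} by move=> z Hz; rewrite mem_cat Hz.
  have s2 : {subset fvars h <= fvars g ++ fvars h} by move=> z Hz; rewrite mem_cat Hz orbT.
  have H1 := IH1 v w (eqL_mono H (leq_maxl _ _) s1).
  have H2 := IH2 v w (eqL_mono H (leq_maxr _ _) s2).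
  tauto.
- move=> x g [N IH]; exists (N + N)%N => v w H.
  have sub : {subset fvars g <= x :: fvars g} by move=> z Hz; rewrite inE Hz orbT.
  split.
  + move=> [a Ha]; have [b Hb] := ext_step a H; exists b.
    by apply/(IH _ _ (eqL_mono Hb (leqnn _) sub)).
  + move=> [b Hb]; have [a Ha] := ext_step b (eqL_sym H); exists a.
    by apply/(IH _ _ (eqL_mono (eqL_sym Ha) (leqnn _) sub)).
- move=> x g [N IH]; exists (N + N)%N => v w H.
  have sub : {subset fvars g <= x :: fvars g} by move=> z Hz; rewrite inE Hz orbT.
  split.
  + move=> Hv b; have [a Ha] := ext_step b (eqL_sym H).
    by apply/(IH _ _ (eqL_mono (eqL_sym Ha) (leqnn _) sub)).
  + move=> Hw a; have [b Hb] := ext_step a H.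
    by apply/(IH _ _ (eqL_mono Hb (leqnn _) sub)).
Qed.

Definition eqN N n v w := eqL N (iota 0 n) v w.
Definition local n (P : seq QZ -> Prop) :=
  exists N, forall v w, eqN N n v w -> P (mkseq v n) -> P (mkseq w n).

Lemma fo_local_def n P : fo_definable n P -> local n P.
Proof.
move=> [f Hf]; have [N HN] := fo_local f; exists N => v w H Pv.
case: n H Pv Hf => [|n] H Pv Hf; first by [].
pose v' k := if (k < n.+1)%N then v k else v 0%N.
pose w' k := if (k < n.+1)%N then w k else w 0%N.
have Ev : mkseq v' n.+1 = mkseq v n.+1.
  by rewrite /mkseq; apply/eq_in_map => k; rewrite mem_iota /= add0n /v' => ->.
have Ew : mkseq w' n.+1 = mkseq w n.+1.
  by rewrite /mkseq; apply/eq_in_map => k; rewrite mem_iota /= add0n /w' => ->.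
rewrite -Ew; apply/Hf/(HN v' w'); last by apply/Hf; rewrite Ev.
move=> i j _ _ p Hp; rewrite /v' /w'.
by case: ifP => Hi; case: ifP => Hj; apply: H => //; rewrite mem_iota.
Qed.


Lemma transl (e : QZ -> QZ) : sucendo e ->
  forall q z, e (q, z) = ((e (q, 0)).1, z + (e (q, 0)).2).
Proof.
move=> He q.
set c := (e (q, 0)).1; set d := (e (q, 0)).2.
have up : forall z, e (q, z) = (c, z + d) -> e (q, z + 1) = (c, z + 1 + d).
  move=> z Hz; have := He (q, z) (q, z + 1).
  rewrite /sucp /= !eqxx /= Hz => /(_ isT).
  case: (e (q, z + 1)) => a b /= /andP [/eqP <- /eqP ->]; congr pair; ring.
have down : forall z, e (q, z) = (c, z + d) -> e (q, z - 1) = (c, z - 1 + d).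
  move=> z Hz; have := He (q, z - 1) (q, z).
  rewrite /sucp /= !eqxx /= subrK eqxx Hz => /(_ isT).
  case: (e (q, z - 1)) => a b /= /andP [/eqP -> /eqP E]; congr pair; lia.
have base : e (q, 0) = (c, 0 + d) by rewrite add0r /c /d; case: (e (q, 0)).
have pos : forall n : nat, e (q, n%:Z) = (c, n%:Z + d).
  elim=> [|n IH]; first exact: base.
  have -> : (n.+1)%:Z = n%:Z + 1 by lia.
  exact: up.
have neg : forall n : nat, e (q, - n%:Z) = (c, - n%:Z + d).
  elim=> [|n IH]; first by rewrite oppr0; exact: base.
  have -> : - (n.+1)%:Z = - n%:Z - 1 by lia.
  exact: down.
by case=> n; [exact: pos | rewrite NegzE; exact: neg].
Qed.

Lemma relof_mkseq (G : structure) (i : sym G) s x0 :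
  relof i s -> s = mkseq (nth x0 s) (arity i).
Proof. by move=> H; rewrite -(relof_size H) mkseq_nth. Qed.

Lemma rel_local (G : structure) (Hfo : forall i : sym G, fo_definable (arity i) (relof i))
  (i : sym G) : local (arity i) (relof i).
Proof. exact: fo_local_def. Qed.

Definition isometry (pi : QZ -> QZ) := forall x y p, sucp p (pi x) (pi y) = sucp p x y.

Lemma iso_endo (G : structure) (Hfo : forall i : sym G, fo_definable (arity i) (relof i))
  pi : isometry pi -> endomorphism G pi.
Proof.
move=> Hpi i s Hs.
have [N HN] := rel_local Hfo i.
have E := relof_mkseq (0,0) Hs; rewrite E in Hs *.
rewrite /mkseq -map_comp.
apply: (HN (nth (0,0) s) (pi \o nth (0,0) s)) => // a b _ _ p _; by rewrite /= Hpi.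
Qed.

Lemma endo_comp (G : structure) e g : endomorphism G e -> endomorphism G g ->
  endomorphism G (e \o g).
Proof. by move=> He Hg i s Hs; rewrite map_comp; apply/He/Hg. Qed.

Lemma endo_suc (G : structure) (Hsuc : exists i : sym G, forall s, relof i s <-> suc_rel s)
  e : endomorphism G e -> sucendo e.
Proof.
move=> He x y Hxy; have [i Hi] := Hsuc.
have : relof i [:: x; y] by apply/Hi; exists x, y.
move/He => /Hi [a [b [[-> ->] H]]]; exact: H.
Qed.


Lemma undup_map_lt (T U : eqType) (F : T -> U) (s : seq T) x y :
  x \in s -> y \in s -> x != y -> F x = F y ->
  (size (undup (map F s)) < size (undup s))%N.
Proof.
move=> Hx Hy Hxy HF.
set u := undup s.
have Hu : uniq u := undup_uniq s.
apply: (@leq_ltn_trans (size (undup (map F u)))).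
  apply: uniq_leq_size; first exact: undup_uniq.
  move=> z; rewrite !mem_undup => /mapP [w Hw ->].
  by apply: map_f; rewrite mem_undup.
rewrite -(size_map F u) ltn_size_undup.
have Hxu : x \in u by rewrite mem_undup.
have Hyu : y \in rem x u by rewrite (mem_rem_uniq _ Hu) inE eq_sym Hxy mem_undup.
rewrite (perm_uniq (perm_map F (perm_to_rem Hxu))) /= HF.
by rewrite (map_f F Hyu).
Qed.

Lemma undup_le1 (T : eqType) (s : seq T) x y :
  (size (undup s) <= 1)%N -> x \in s -> y \in s -> x = y.
Proof.
rewrite -(mem_undup s x) -(mem_undup s y).
case: (undup s) => [|a [|b l]] //= _; rewrite !inE => /eqP -> /eqP -> //.
Qed.

Lemma undup_gt1 (T : eqType) (s : seq T) :
  (1 < size (undup s))%N -> exists x y, [/\ x \in s, y \in s & x != y].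
Proof.
have := undup_uniq s; have Hm := mem_undup s.
case: (undup s) Hm => [|a [|b l]] //= Hm /andP [Ha _] _.
exists a, b; rewrite -!Hm !inE !eqxx ?orbT; split => //.
by apply/eqP => E; move: Ha; rewrite E inE eqxx.
Qed.

Definition tr (u v x : rat) := if x == u then v else if x == v then u else x.

Lemma trK u v : involutive (tr u v).
Proof.
move=> x; rewrite /tr.
case: (eqVneq x u) => [->|Hxu]; first by rewrite eqxx; case: eqP.
case: (eqVneq x v) => [->|Hxv]; first by rewrite eqxx.
by rewrite (negbTE Hxu) (negbTE Hxv).
Qed.

Lemma tr_inj u v : injective (tr u v).
Proof. exact: inv_inj (trK u v). Qed.

Lemma inj_two (c c' a b : rat) : c != c' -> a != b ->
  exists phi : rat -> rat, [/\ injective phi, phi c = a & phi c' = b].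
Proof.
move=> Hc Hab.
pose s1 := tr c a.
pose s2 := tr (s1 c') b.
exists (s2 \o s1); split.
- by apply: inj_comp; apply: tr_inj.
- rewrite /= /s1 {1}/tr eqxx /s2 /tr.
  have Hs : s1 c' != a.
    have E1 : s1 c = a by rewrite /s1 /tr eqxx.
    apply: contra Hc => /eqP E; apply/eqP.
    have : s1 c = s1 c' by rewrite E1 E.
    exact: tr_inj.
  by rewrite eq_sym (negbTE Hs) (negbTE Hab).
- by rewrite /= /s2 /tr eqxx.
Qed.

Section Realize.
Variable G : structure.
Hypothesis Hfo : forall i : sym G, fo_definable (arity i) (relof i).
Hypothesis Hsuc : exists i : sym G, forall s, relof i s <-> suc_rel s.
Variable e : QZ -> QZ.
Hypothesis He : endomorphism G e.
Variables a1 b1 : rat.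
Hypothesis Hab : a1 != b1.
Hypothesis Hf : (e (a1, 0)).1 = (e (b1, 0)).1.

Lemma realize (Qs : seq rat) (delta : rat -> int) :
  exists g c0, endomorphism G g /\ forall q, q \in Qs -> forall z, g (q, z) = (c0, z + delta q).
Proof.
have Hes := endo_suc Hsuc He.
pose f q := (e (q, 0)).1.
pose sig q := (e (q, 0)).2.
suff : forall m g (C : rat -> rat), endomorphism G g ->
  (forall q, q \in Qs -> forall z, g (q, z) = (C q, z + delta q)) ->
  (size (undup (map C Qs)) <= m)%N ->
  exists g c0, endomorphism G g /\ forall q, q \in Qs -> forall z, g (q, z) = (c0, z + delta q).
  move=> H; apply: (H _ (fun x => (x.1, x.2 + delta x.1)) id) => //.
  - apply: iso_endo => // x y p; rewrite /sucp /=.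
    case: (eqVneq x.1 y.1) => [E|E] //=.
    rewrite E; by apply/idP/idP => /eqP E'; apply/eqP; lia.
elim=> [|m IH] g C Hg HC Hm.
- exists g, 0; split => // q Hq; move: Hm; rewrite leqn0 size_eq0 => /eqP.
  by move/(congr1 (fun l => C q \in l)); rewrite mem_undup (map_f C Hq).
case: (leqP (size (undup (map C Qs))) 1) => H1.
- exists g, (C (head 0 Qs)); split => // q Hq z; rewrite HC //.
  congr pair; apply: (undup_le1 H1); apply: map_f => //.
  by move: Hq; case: {HC Hm H1 IH}Qs => //= x l _; rewrite inE eqxx.
- have [c [c' [Hc Hc' Hcc']]] := undup_gt1 H1.
  have [phi [Hphi Ec Ec']] := inj_two Hcc' Hab.
  pose pi (x : QZ) := (phi x.1, x.2 - sig (phi x.1)).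
  have Hpi : endomorphism G pi.
    apply: iso_endo => // x y p; rewrite /sucp /= (inj_eq Hphi).
    case: (eqVneq x.1 y.1) => [E|E] //=.
    rewrite E; by apply/idP/idP => /eqP E'; apply/eqP; lia.
  apply: (IH (e \o (pi \o g)) (fun q => f (phi (C q)))).
  + exact: endo_comp He (endo_comp Hpi Hg).
  + move=> q Hq z; rewrite /= HC // /pi /= (transl Hes) /f; congr pair.
    rewrite /sig; ring.
  + rewrite -ltnS; apply: leq_trans Hm.
    rewrite (map_comp (fun x => f (phi x)) C).
    apply: (undup_map_lt Hc Hc' Hcc').
    by rewrite /= Ec Ec' /f.
Qed.

End Realize.


Lemma far (B N i j : nat) (a b p : int) : i != j ->
  (absz a <= B)%N -> (absz b <= B)%N -> (absz p <= N)%N ->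
  (((2 * B + N + 1) * j)%N%:Z + b != ((2 * B + N + 1) * i)%N%:Z + a + p).
Proof. move=> Hij Ha Hb Hp; apply/eqP => E; nia. Qed.

Lemma abs_le_sum (T : eqType) (F : T -> int) (s : seq T) x : x \in s ->
  (absz (F x) <= \sum_(y <- s) absz (F y))%N.
Proof.
elim: s => //= y s IH; rewrite big_cons inE => /orP [/eqP ->|/IH]; lia.
Qed.

Lemma two_P (G : structure)
  (Hfo : forall i : sym G, fo_definable (arity i) (relof i))
  (Hsuc : exists i : sym G, forall s, relof i s <-> suc_rel s) :
  (exists e : QZ -> QZ, endomorphism G e /\
      exists a b : QZ, ~ same_copy a b /\ same_copy (e a) (e b)) ->
  forall (i : sym G) s h, sucendo h -> relof i s -> relof i (map h s).
Proof.
move=> [e [He [[a1 a2] [[b1 b2] [Hab Heab]]]]] i s h Hh Hs.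
have Hes := endo_suc Hsuc He.
have Hab' : a1 != b1 by apply/eqP.
have Hf : (e (a1, 0)).1 = (e (b1, 0)).1.
  by move: Heab; rewrite /same_copy (transl Hes a1) (transl Hes b1).
have [N HN] := rel_local Hfo i.
pose n := arity i.
pose V := nth (0, 0) s.
pose fh q := (h (q, 0)).1.
pose tau q := (h (q, 0)).2.
pose Qs := map fst s.
pose B := (\sum_(u <- s) absz (u.2 + tau u.1)%R)%N.
pose M := (2 * B + N + 1)%N.
pose delta q := tau q + (M * index (fh q) (map fh Qs))%N%:Z.
have [g [c0 [Hg Hgq]]] := realize Hfo Hsuc He Hab' Hf Qs delta.
have E := relof_mkseq (0,0) Hs.
have Hgs := Hg i s Hs.
rewrite E /mkseq -map_comp in Hgs; rewrite E /mkseq -map_comp.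
apply: (HN (g \o V)) => // k l; rewrite !mem_iota !add0n /= => Hk Hl p Hp.
have Hks : V k \in s by apply: mem_nth; rewrite (relof_size Hs).
have Hls : V l \in s by apply: mem_nth; rewrite (relof_size Hs).
change (sucp p (g (V k)) (g (V l)) = sucp p (h (V k)) (h (V l))).
case: (V k) Hks => u1 u2 Hu; case: (V l) Hls => w1 w2 Hw.
idtac.
rewrite !Hgq; try by apply: (map_f fst Hu) || apply: (map_f fst Hw).
rewrite (transl Hh u1) (transl Hh w1) -/(fh u1) -/(fh w1) -/(tau u1) -/(tau w1).
rewrite /sucp /= eqxx /=.
have Bu : (absz (u2 + tau u1)%R <= B)%N.
  exact: (abs_le_sum (fun u : QZ => u.2 + tau u.1) Hu).
have Bw : (absz (w2 + tau w1)%R <= B)%N.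
  exact: (abs_le_sum (fun u : QZ => u.2 + tau u.1) Hw).
case: (eqVneq (fh u1) (fh w1)) => [Efh|Nfh] /=.
- rewrite /delta Efh; apply/idP/idP => /eqP H'; apply/eqP; lia.
- apply/negbTE; rewrite /delta.
  have Hi : index (fh u1) (map fh Qs) != index (fh w1) (map fh Qs).
    apply: contra Nfh => /eqP Ei; apply/eqP.
    have Hu' : fh u1 \in map fh Qs by rewrite map_f // (map_f fst Hu).
    by rewrite -(nth_index 0 Hu') Ei nth_index // map_f // (map_f fst Hw).
  have := far Hi Bu Bw Hp; rewrite -/M.
  apply: contra => /eqP H'; apply/eqP; lia.
Qed.


Lemma take_nth_drop (T : Type) (x0 : T) (s : seq T) k : (k < size s)%N ->
  s = take k s ++ nth x0 s k :: drop k.+1 s.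
Proof. by move=> Hk; rewrite -drop_nth // cat_take_drop. Qed.

Lemma vars_of (n : nat) (d : dnf) c (a b : nat) q bb : dnf_vars_lt n d ->
  c \in d -> (a, b, q, bb) \in c -> (a < n)%N /\ (b < n)%N.
Proof.
move=> /allP Hd Hc /(allP (Hd c Hc)) /= /andP [] //.
Qed.

Lemma P_one (G : structure)
  (HP : forall (i : sym G) s h, sucendo h -> relof i s -> relof i (map h s)) :
  forall (i : sym G) (d : dnf),
      dnf_defines (arity i) (relof i) d -> reduced d -> positive d.
Proof.
move=> i d [Hvars Hdef] [Hr1 Hr2]; set n := arity i in Hvars Hdef.
case Hp: (positive d) => //; move/negbT: Hp => Hpos.
have /allPn [c Hc Hcpos] := Hpos.
have /allPn [lit Hlit Hlitneg] := Hcpos.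
set k := index c d; set l := index lit c.
have Hk : (k < size d)%N by rewrite index_mem.
have Hl : (l < size c)%N by rewrite index_mem.
have Hnk : nth [::] d k = c by rewrite nth_index.
have Hnl : nth lit c l = lit by rewrite nth_index.
have Dd := take_nth_drop [::] Hk; rewrite Hnk in Dd.
have Dc := take_nth_drop lit Hl; rewrite Hnl in Dc.
set c' := take l c ++ drop l.+1 c.
have Ddel : del_lit d k l = take k d ++ c' :: drop k.+1 d.
  by rewrite /del_lit set_nthE Hk Hnk.
have Dholds : forall v, dnf_holds v d = [|| has (clause_holds v) (take k d),
   clause_holds v c | has (clause_holds v) (drop k.+1 d)].
  by move=> v; rewrite /dnf_holds {1}Dd has_cat /=.
have Cholds : forall v, clause_holds v c =
  [&& all (lit_holds v) (take l c), lit_holds v lit & all (lit_holds v) (drop l.+1 c)].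
  by move=> v; rewrite /clause_holds {1}Dc all_cat /=.
have [u Hu] : exists u, clause_holds u c.
  apply: NNPP => Hno; apply: (Hr1 k Hk) => v.
  rewrite Dholds /dnf_holds /del_nth has_cat.
  have -> : clause_holds v c = false by apply/negP => H; apply: Hno; exists v.
  by [].

have [t [Htd Htc' Htlit]] : exists t, [/\ dnf_holds t d = false,
     all (lit_holds t) c' & lit_holds t lit = false].
  apply: NNPP => Hno2; apply: (Hr2 k l Hk); first by rewrite Hnk.
  move=> v.
  rewrite Ddel Dholds /dnf_holds has_cat /= Cholds.
  rewrite [clause_holds v c']/clause_holds /c' all_cat.
  case E1: (has _ (take k d)); case E2: (has _ (drop k.+1 d)); rewrite ?orbT ?orbF //=.
  case E3: (all _ (take l c)); case E4: (all _ (drop l.+1 c)); rewrite ?andbF //=.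
  case E5: (lit_holds v lit) => //; exfalso; apply: Hno2; exists v; split => //.
  - by rewrite Dholds E1 E2 Cholds E3 E4 E5.
  - by rewrite all_cat E3 E4.
have Hu' := Hu; rewrite Cholds in Hu'; move: Hu' => /and3P [Hu1 Hulit Hu2].
have Huc' : all (lit_holds u) c' by rewrite all_cat Hu1 Hu2.
case Elit: lit => [[[ii jj] p] bb]; rewrite Elit in Hlit Hlitneg Htlit Hulit Dc.
move: Hlitneg => /= /negbTE Ebb; subst bb.
have Htp : sucp p (t ii) (t jj) by move: Htlit; rewrite /lit_holds; case: (sucp _ _ _).
have Hup : sucp p (u ii) (u jj) = false by move: Hulit; rewrite /lit_holds; case: (sucp _ _ _).
have [Hii Hjj] := vars_of Hvars Hc Hlit.
have [F HF] := fresh_rat [seq (t k0).1 | k0 <- iota 0 n].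
have HFt : forall k0, (k0 < n)%N -> (t k0).1 != F.
  move=> k0 Hk0; apply: contraNneq HF => <-; apply: map_f; by rewrite mem_iota.
pose inA k0 := [&& (t k0).1 == (t jj).1, (u k0).1 == (u jj).1 &
                   (u k0).2 - (u jj).2 == (t k0).2 - (t jj).2].
pose S k0 := if inA k0 then (F, (t k0).2) else t k0.
have transfer : forall a b q, sucp q (t a) (t b) -> sucp q (u a) (u b) -> inA a = inA b.
  move=> a b q /andP [/eqP Et1 /eqP Et2] /andP [/eqP Eu1 /eqP Eu2].
  rewrite /inA Et1 Eu1 Et2 Eu2; congr andb; congr andb.
  have -> : (u a).2 + q - (u jj).2 = q + ((u a).2 - (u jj).2) by ring.
  have -> : (t a).2 + q - (t jj).2 = q + ((t a).2 - (t jj).2) by ring.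
  by rewrite (inj_eq (@addrI _ q)).
have litS : forall a b q bb', (a < n)%N -> (b < n)%N ->
    lit_holds t (a, b, q, bb') -> lit_holds u (a, b, q, bb') -> lit_holds S (a, b, q, bb').
  move=> a b q bb' Ha Hb /eqP Ht /eqP Hu0; apply/eqP; rewrite /S.
  case Ea: (inA a); case Eb: (inA b).
  - move: Ea Eb; rewrite /inA => /and3P [/eqP Ea _ _] /and3P [/eqP Eb _ _].
    by rewrite -Ht /sucp /= Ea Eb !eqxx.
  - rewrite /sucp /= eq_sym (negbTE (HFt b Hb)) /=.
    case: bb' Ht Hu0 => // Ht Hu0.
    by move: (transfer a b q Ht Hu0); rewrite Ea Eb.
  - rewrite /sucp /= (negbTE (HFt a Ha)) /=.
    case: bb' Ht Hu0 => // Ht Hu0.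
    by move: (transfer a b q Ht Hu0); rewrite Ea Eb.
  - exact: Ht.
have inAjj : inA jj by rewrite /inA !eqxx !subrr eqxx.
have inAii : inA ii = false.
  apply/negP => /and3P [/eqP E1 /eqP E2 /eqP E3]; move: Hup.
  move: Htp => /andP [_ /eqP E4].
  rewrite /sucp E2 eqxx /=; move/negbT/negP; apply; apply/eqP; clear -E3 E4; lia.
have HSc : clause_holds S c.
  rewrite Cholds; apply/and3P; split.
  - apply/allP => [[[[a b] q] bb']] Hm.
    have Hm' : (a, b, q, bb') \in c by rewrite Dc mem_cat Hm.
    have [Ha Hb] := vars_of Hvars Hc Hm'.
    apply: litS => //.
    + by apply: (allP Htc'); rewrite mem_cat Hm.
    + by apply: (allP Huc'); rewrite mem_cat Hm.
  - rewrite Elit /lit_holds /S inAii inAjj /sucp /= (negbTE (HFt ii Hii)) //.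
  - apply/allP => [[[[a b] q] bb']] Hm.
    have Hm' : (a, b, q, bb') \in c by rewrite Dc mem_cat inE Hm !orbT.
    have [Ha Hb] := vars_of Hvars Hc Hm'.
    apply: litS => //.
    + by apply: (allP Htc'); rewrite mem_cat Hm orbT.
    + by apply: (allP Huc'); rewrite mem_cat Hm orbT.
have RS : relof i (mkseq S n) by apply/Hdef; apply/hasP; exists c.
pose h (x : QZ) := if x.1 == F then ((t jj).1, x.2) else x.
have Hh : sucendo h.
  move=> x y /andP [/eqP E1 /eqP E2]; rewrite /h E1.
  by case: (y.1 == F); rewrite /sucp /= ?E1 E2 !eqxx.
have := HP i _ h Hh RS.
have -> : map h (mkseq S n) = mkseq t n.
  rewrite /mkseq -map_comp; apply/eq_in_map => k0; rewrite mem_iota add0n /= => Hk0.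
  rewrite /S /h; case E: (inA k0).
  - move: E => /and3P [/eqP E _ _]; rewrite /= eqxx -E; by case: (t k0).
  - by rewrite (negbTE (HFt k0 Hk0)).
by move/Hdef; rewrite Htd.
Qed.


Lemma classical_filter (T : eqType) (Q : T -> Prop) (s : seq T) :
  exists s' : seq T, forall x, x \in s' <-> (x \in s /\ Q x).
Proof.
elim: s => [|y s [s' IH]]; first by exists [::] => x; split => // [[]].
case: (classic (Q y)) => Hy.
- exists (y :: s') => x; rewrite inE; split.
  + case/orP => [/eqP ->|/IH [Hx HQ]]; first by rewrite inE eqxx.
    by rewrite inE Hx orbT.
  + rewrite inE; case=> /orP [/eqP ->|Hx] HQ; first by rewrite eqxx.
    by apply/orP; right; apply/IH.
- exists s' => x; split.
  + by move/IH => [Hx HQ]; rewrite inE Hx orbT.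
  + rewrite inE; case=> /orP [/eqP -> //|Hx] HQ.
    by apply/IH.
Qed.

Fixpoint allbools (m : nat) : seq (seq bool) :=
  if m is m'.+1 then [seq b :: bs | b <- [:: true; false], bs <- allbools m'] else [:: [::]].

Lemma mem_allbools bs : bs \in allbools (size bs).
Proof.
elim: bs => [|b bs IH] //=.
by case: b; rewrite mem_cat ?cats0 ?(map_f (cons true) IH) ?(map_f (cons false) IH) ?orbT.
Qed.

Definition ints (N : nat) : seq int := [seq (k%:Z - N%:Z) | k <- iota 0 (2 * N + 1)].

Lemma mem_ints N (p : int) : (absz p <= N)%N -> p \in ints N.
Proof.
move=> Hp; apply/mapP; exists (absz (p + N%:Z)); last by lia.
rewrite mem_iota; lia.
Qed.

Definition Lits (n N : nat) : seq (nat * nat * int) :=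
  [seq (ij, p) | ij <- [seq (i, j) | i <- iota 0 n, j <- iota 0 n], p <- ints N].

Lemma mem_Lits n N (l : nat * nat * int) : l \in Lits n N ->
  (l.1.1 < n)%N /\ (l.1.2 < n)%N.
Proof.
case/allpairsP => [[ij p] [/allpairsP [[i j] [Hi Hj ->]] _ ->]] /=.
by move: Hi Hj; rewrite !mem_iota.
Qed.

Lemma Lits_mem n N i j p : (i < n)%N -> (j < n)%N -> (absz p <= N)%N ->
  (i, j, p) \in Lits n N.
Proof.
move=> Hi Hj Hp; apply: (allpairs_f (fun ij p => (ij, p))); last exact: mem_ints.
by apply: (allpairs_f (fun i j => (i, j))); rewrite mem_iota.
Qed.

Definition mkc (L : seq (nat * nat * int)) (bs : seq bool) : clause :=
  [seq (lb.1.1.1, lb.1.1.2, lb.1.2, lb.2) | lb <- zip L bs].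

Definition clause_of (L : seq (nat * nat * int)) (v : nat -> QZ) : clause :=
  [seq (l.1.1, l.1.2, l.2, sucp l.2 (v l.1.1) (v l.1.2)) | l <- L].

Lemma clause_of_mkc L v :
  clause_of L v = mkc L [seq sucp l.2 (v l.1.1) (v l.1.2) | l <- L].
Proof. by rewrite /clause_of /mkc; elim: L => //= l L ->. Qed.

Lemma clause_holds_of L v w :
  clause_holds w (clause_of L v) =
  all (fun l => sucp l.2 (w l.1.1) (w l.1.2) == sucp l.2 (v l.1.1) (v l.1.2)) L.
Proof. by rewrite /clause_holds /clause_of all_map. Qed.

Lemma local_dnf n P : local n P -> exists d, dnf_defines n P d.
Proof.
move=> [N HN].
pose L := Lits n N.
pose allC := [seq mkc L bs | bs <- allbools (size L)].
have [d Hd] := classical_filter (fun c => exists v, P (mkseq v n) /\ c = clause_of L v) allC.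
exists d; split.
- apply/allP => c /Hd [_ [v [_ ->]]]; apply/allP => lit /mapP [l Hl ->] /=.
  by have [] := mem_Lits Hl => -> ->.
- move=> w; split.
  + move=> Pw; apply/hasP; exists (clause_of L w).
    * apply/Hd; split; last by exists w.
      rewrite clause_of_mkc; apply: map_f.
      by rewrite -(size_map (fun l => sucp l.2 (w l.1.1) (w l.1.2)) L) mem_allbools.
    * by rewrite clause_holds_of; apply/allP => l _.
  + move/hasP => [c /Hd [_ [v [Pv ->]]]]; rewrite clause_holds_of => /allP H.
    apply: (HN v) => // i j; rewrite !mem_iota /= !add0n => Hi Hj p Hp.
    by apply/esym/eqP; apply: (H (i, j, p)); apply: Lits_mem.
Qed.


Definition mu (d : dnf) := (size d + sumn (map size d))%N.

Lemma mu_cat (s1 s2 : dnf) : mu (s1 ++ s2) = (mu s1 + mu s2)%N.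
Proof. rewrite /mu size_cat map_cat sumn_cat; lia. Qed.

Lemma mu_cons (c : clause) (s : dnf) : mu (c :: s) = ((size c).+1 + mu s)%N.
Proof. rewrite /mu /=; lia. Qed.

Lemma all_take_drop (T : Type) (a : pred T) (s : seq T) k :
  all a s -> all a (take k s) /\ all a (drop k s).
Proof.
move=> H; rewrite -(cat_take_drop k s) all_cat in H.
by case/andP: H.
Qed.

Lemma reduce n P d : dnf_defines n P d -> exists d', dnf_defines n P d' /\ reduced d'.
Proof.
move: {2}(mu d) (leqnn (mu d)) => m; elim: m d => [|m IH] d Hm [Hv Hdef].
- have Hd0 : d = [::].
    apply/eqP; rewrite -size_eq0 -leqn0; exact: leq_trans (leq_addr _ _) Hm.
  exists d; split => //; split => [k|k l]; by rewrite Hd0.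
case: (classic (reduced d)) => Hred; first by exists d.
have equiv_ok : forall d', dnf_equiv d' d -> dnf_vars_lt n d' -> dnf_defines n P d'.
  by move=> d' E Hv'; split => // v; rewrite E.
case: (classic (exists k, (k < size d)%N /\ dnf_equiv (del_nth d k) d)).
- move=> [k [Hk E]].
  have Dd := take_nth_drop [::] Hk.
  apply: (IH (del_nth d k)).
  + move: Hm; rewrite {1}Dd /del_nth !mu_cat mu_cons.
    rewrite addnCA addSn ltnS => H; exact: leq_trans (leq_addl _ _) H.
  + apply: equiv_ok => //; rewrite /dnf_vars_lt /del_nth all_cat.
    by have [-> _] := all_take_drop k Hv; have [_ ->] := all_take_drop k.+1 Hv.
- move=> Hno1.
  case: (classic (exists k l, [/\ (k < size d)%N, (l < size (nth [::] d k))%N &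
                     dnf_equiv (del_lit d k l) d])).
  + move=> [k [l [Hk Hl E]]].
    set c := nth [::] d k in Hl.
    have Dd := take_nth_drop [::] Hk.
    have Dc := take_nth_drop (0%N, 0%N, 0, true) Hl.
    have Ddel : del_lit d k l = take k d ++ (take l c ++ drop l.+1 c) :: drop k.+1 d.
      by rewrite /del_lit set_nthE Hk.
    apply: (IH (del_lit d k l)).
    * move: Hm; rewrite Ddel {1}Dd !mu_cat !mu_cons -/c.
      have -> : size c = (size (take l c ++ drop l.+1 c)).+1.
        by rewrite {1}Dc !size_cat /= addnS.
      move=> H; rewrite -ltnS; apply: leq_trans H.
      by rewrite ltn_add2l ltn_add2r.
    * apply: equiv_ok => //; rewrite Ddel /dnf_vars_lt all_cat /=.
      have [-> _] := all_take_drop k Hv; have [_ ->] := all_take_drop k.+1 Hv.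
      have Hc : c \in d by rewrite /c mem_nth.
      have Hvc := allP Hv c Hc.
      rewrite all_cat; have [-> _] := all_take_drop l Hvc; have [_ ->] := all_take_drop l.+1 Hvc.
      by [].
  + move=> Hno2; exfalso; apply: Hred; split.
    * move=> k Hk E; apply: Hno1; by exists k.
    * move=> k l Hk Hl E; apply: Hno2; by exists k, l.
Qed.

Lemma one_two (G : structure)
  (Hfo : forall i : sym G, fo_definable (arity i) (relof i)) :
  (forall (i : sym G) (d : dnf),
      dnf_defines (arity i) (relof i) d -> reduced d -> positive d) ->
  exists e : QZ -> QZ, endomorphism G e /\
      exists a b : QZ, ~ same_copy a b /\ same_copy (e a) (e b).
Proof.
move=> H1.
pose e0 (x : QZ) : QZ := (0, x.2).
exists e0; split; last first.
  exists (0, 0), (1, 0); split; last by [].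
  rewrite /same_copy /=; move=> E.
  by move: (congr1 (fun r : rat => r == 0) E); rewrite eqxx.
move=> i s Hs.
have [d0 Hd0] := local_dnf (fo_local_def (Hfo i)).
have [d [[Hv Hdef] Hred]] := reduce Hd0.
have Hpos := H1 i d (conj Hv Hdef) Hred.
have E := relof_mkseq (0,0) Hs; rewrite E in Hs *.
rewrite /mkseq -map_comp; move/Hdef: Hs => /hasP [c Hc Hcl].
apply/Hdef/hasP; exists c => //.
have Hcp := allP Hpos c Hc.
apply/allP => [[[[a b] q] bb]] Hl.
have Hbb : bb = true := allP Hcp _ Hl.
move: (allP Hcl _ Hl); rewrite Hbb /lit_holds => /eqP Hs'.
apply/eqP; move: Hs'; rewrite /sucp /= => /andP [_ ->]; by rewrite ?eqxx.
Qed.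


Lemma sucp_split (p : int) (x z : QZ) :
  sucp (p + 1) x z <-> exists y, sucp p x y /\ sucp 1 y z.
Proof.
split.
- move=> /andP [/eqP E1 /eqP E2]; exists (x.1, x.2 + p); split.
  + by rewrite /sucp /= !eqxx.
  + apply/andP; split; first by rewrite /= E1.
    apply/eqP; rewrite /= E2; ring.
- move=> [y [/andP [/eqP E1 /eqP E2] /andP [/eqP E3 /eqP E4]]].
  apply/andP; split; first by rewrite E1 E3.
  apply/eqP; rewrite E4 E2; ring.
Qed.

Lemma sucp_eq (c : int) (A B' : QZ) : sucp c A B' <-> B' = (A.1, A.2 + c).
Proof.
case: B' => b1 b2; split.
- by move=> /andP [/eqP /= <- /eqP /= ->].
- by case=> -> ->; rewrite /sucp /= !eqxx.
Qed.

Fixpoint sucf (k i j base : nat) : fo :=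
  if k is k'.+1 then FEx (base + k') (FAnd (sucf k' i (base + k') base) (FSuc (base + k') j))
  else FEq i j.

Lemma sucf_sem k i j base v : (i < base)%N -> (j < base \/ base + k <= j)%N ->
  (fo_holds v (sucf k i j base) <-> sucp k%:Z (v i) (v j)).
Proof.
elim: k j v => [|k IH] j v Hi Hj /=.
- rewrite sucp0; split => [->|/eqP] //; exact: eqxx.
- have -> : (k.+1)%:Z = k%:Z + 1 by lia.
  rewrite sucp_split; split.
  + move=> [a [H1 H2]]; exists a; split.
    * move/IH: H1; rewrite /upd; rewrite ifF; last by apply/negbTE; rewrite neq_ltn; lia.
      rewrite eqxx; apply; [done | right; lia].
    * move: H2; rewrite /upd eqxx ifF //; apply/negbTE; rewrite neq_ltn; lia.
  + move=> [a [H1 H2]]; exists a; split.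
    * apply/IH; [done | right; lia |].
      rewrite /upd eqxx ifF //; apply/negbTE; rewrite neq_ltn; lia.
    * rewrite /upd eqxx ifF //; apply/negbTE; rewrite neq_ltn; lia.
Qed.

Definition sucfz (p : int) i j base : fo :=
  if (0 <= p) then sucf (absz p) i j base else sucf (absz p) j i base.

Lemma sucfz_sem p i j base v : (i < base)%N -> (j < base)%N ->
  (fo_holds v (sucfz p i j base) <-> sucp p (v i) (v j)).
Proof.
move=> Hi Hj; rewrite /sucfz; case: ifP => Hp.
- rewrite sucf_sem //; last by left.
  by have -> : (absz p)%:Z = p by lia.
- rewrite sucf_sem //; last by left.
  rewrite [sucp p _ _]sucp_sym; by have -> : - p = (absz p)%:Z by lia.
Qed.

Definition lit_fo base (l : literal) : fo :=
  let: (i, j, p, b) := l in if b then sucfz p i j base else FNot (sucfz p i j base).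

Definition clause_fo base (c : clause) : fo := foldr (fun l f => FAnd (lit_fo base l) f) FTrue c.
Definition dnf_fo base (d : dnf) : fo := foldr (fun c f => FOr (clause_fo base c) f) (FNot FTrue) d.

Lemma dnf_fo_sem n d v : dnf_vars_lt n d -> (fo_holds v (dnf_fo n d) <-> dnf_holds v d).
Proof.
elim: d => [|c d IH] /=; first by split => // H; apply: H.
move=> /andP [Hc Hd]; rewrite /dnf_holds /= -/(dnf_holds v d).
have -> : fo_holds v (clause_fo n c) <-> clause_holds v c.
  elim: c Hc {IH Hd} => [|[[[i j] p] b] c IHc] //= /andP [/andP [Hi Hj] Hc].
  rewrite /clause_holds /= -/(clause_holds v c).
  have IH2 := IHc Hc.
  have Hl : fo_holds v (lit_fo n (i, j, p, b)) <-> lit_holds v (i, j, p, b).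
    case: b => /=; rewrite sucfz_sem //.
    + by split => [->|/eqP].
    + split => [H|/eqP H]; first by apply/eqP/negbTE/negP.
      by rewrite H.
  split => [[/Hl H1 /IH2 H2]|/andP [/Hl H1 /IH2 H2]] //; by apply/andP; split.
rewrite (IH Hd); split.
- by case=> [->|->]; rewrite ?orbT.
- by case/orP; [left|right].
Qed.

Lemma dnf_fo_def n P d : dnf_defines n P d -> fo_definable n P.
Proof.
move=> [Hv Hdef]; exists (dnf_fo n d) => v.
by rewrite Hdef dnf_fo_sem.
Qed.


Lemma pp_pres (G' : structure) h :
  (forall (i : sym G') s, relof i s -> relof i (map h s)) ->
  forall (phi : ppf G') v, pp_holds v phi -> pp_holds (h \o v) phi.
Proof.
move=> Hh; elim=> /=.
- by move=> i xs v H; rewrite map_comp; apply: Hh.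
- by move=> i j v ->.
- by [].
- by move=> g IHg k IHk v [H1 H2]; split; [apply: IHg | apply: IHk].
- move=> x g IH v [a Ha]; exists (h a).
  have -> : upd (h \o v) x (h a) = h \o upd v x a.
    by apply: functional_extensionality => k; rewrite /upd /=; case: ifP.
  exact: IH.
Qed.

Definition val2 (x y : QZ) : nat -> QZ := fun k => if k == 0%N then x else y.

Lemma local2_R (R : QZ -> QZ -> Prop) :
  local 2 (fun s => R (nth (0, 0) s 0) (nth (0, 0) s 1)) ->
  exists N, forall x y x' y', eqN N 2 (val2 x y) (val2 x' y') -> R x y -> R x' y'.
Proof.
move=> [N HN]; exists N => x y x' y' H Rxy.
by have := HN _ _ H; rewrite /= /val2 /=; apply.
Qed.

Lemma far_diff (R : QZ -> QZ -> Prop) N :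
  (forall x y x' y', eqN N 2 (val2 x y) (val2 x' y') -> R x y -> R x' y') ->
  forall x y y'', R x y -> x.1 = y.1 -> (N < absz (y.2 - x.2))%N -> x.1 != y''.1 ->
  R x y''.
Proof.
move=> HN x y y'' Rxy E1 E2 E3; apply: (HN x y) => //.
move=> i j; rewrite !mem_iota /= !add0n => Hi Hj p Hp.
have : (i == 0%N) || (i == 1%N) by lia.
have : (j == 0%N) || (j == 1%N) by lia.
rewrite /val2 => /orP [/eqP ->|/eqP ->] /orP [/eqP ->|/eqP ->] //=.
- rewrite /sucp [y''.1 == _]eq_sym (negbTE E3) -E1 eqxx /=; apply/negbTE/eqP; lia.
- rewrite /sucp (negbTE E3) E1 eqxx /=; apply/negbTE/eqP; lia.
- by rewrite !sucp_refl.
Qed.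

Lemma two_noR (G : structure)
  (Hfo : forall i : sym G, fo_definable (arity i) (relof i))
  (Hsuc : exists i : sym G, forall s, relof i s <-> suc_rel s) :
  (exists e : QZ -> QZ, endomorphism G e /\
      exists a b : QZ, ~ same_copy a b /\ same_copy (e a) (e b)) ->
   ~ (exists R : QZ -> QZ -> Prop,
        pp_definable2 G R /\ nontrivial2 R /\ infinite_distance_degree R).
Proof.
move=> H2 [R [[phi Hphi] [[Hfo2 Hntriv] Hinf]]].
have HP := two_P Hfo Hsuc H2.
have Rpres : forall h, sucendo h -> forall x y, R x y -> R (h x) (h y).
  move=> h Hh x y Rxy.
  have := pp_pres (fun i s => HP i s h Hh) (proj1 (Hphi (val2 x y)) Rxy).
  by move/(Hphi (h \o val2 x y)).
have [N HN] := local2_R (fo_local_def Hfo2).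
have [x [y [Rxy [Ec Ed]]]] := Hinf N.
pose y'' : QZ := (x.1 + 1, 0).
have Hxy'' : x.1 != y''.1 by rewrite /y'' /=; apply/eqP => E; lra.
have Rxy'' := far_diff HN Rxy Ec Ed Hxy''.
have Hfull : forall x' y', R x' y'.
  move=> x' y'.
  pose hh (z : QZ) : QZ := if z.1 == x.1 then (x'.1, z.2 - x.2 + x'.2)
                           else (y'.1, z.2 - y''.2 + y'.2).
  have Hhh : sucendo hh.
    move=> a b /andP [/eqP E1 /eqP E2]; rewrite /hh -E1.
    case: (a.1 == x.1); rewrite /sucp /= eqxx /= E2; apply/eqP; ring.
  have := Rpres hh Hhh _ _ Rxy''.
  rewrite /hh eqxx [y''.1 == _]eq_sym (negbTE Hxy'').
  by rewrite subrr add0r subrr add0r -!surjective_pairing.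
apply: Hntriv; exists (PTrue QZsuc) => v; split => // _; exact: Hfull.
Qed.


Section PPChain.
Variable G : structure.
Variable isuc : sym G.
Hypothesis Hisuc : forall s, relof isuc s <-> suc_rel s.

Lemma isuc_sem a b : relof isuc [:: a; b] <-> sucp 1 a b.
Proof.
rewrite Hisuc; split; first by move=> [x [y [[-> ->] H]]].
by move=> H; exists a, b.
Qed.

Fixpoint ppsuc (k i j base : nat) : ppf G :=
  if k is k'.+1 then PEx (base + k') (PAnd (ppsuc k' i (base + k') base) (PRel isuc [:: base + k'; j]))
  else PEq G i j.

Lemma ppsuc_sem k i j base v : (i < base)%N -> (j < base \/ base + k <= j)%N ->
  (pp_holds v (ppsuc k i j base) <-> sucp k%:Z (v i) (v j)).
Proof.
elim: k j v => [|k IH] j v Hi Hj /=.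
- rewrite sucp0; split => [->|/eqP] //; exact: eqxx.
- have -> : (k.+1)%:Z = k%:Z + 1 by lia.
  rewrite sucp_split; split.
  + move=> [a [H1 H2]]; exists a; split.
    * move/IH: H1; rewrite /upd; rewrite ifF; last by apply/negbTE; rewrite neq_ltn; lia.
      rewrite eqxx; apply; [done | right; lia].
    * move/isuc_sem: H2; rewrite /upd eqxx ifF //; apply/negbTE; rewrite neq_ltn; lia.
  + move=> [a [H1 H2]]; exists a; split.
    * apply/IH; [done | right; lia |].
      rewrite /upd eqxx ifF //; apply/negbTE; rewrite neq_ltn; lia.
    * apply/isuc_sem; rewrite /upd eqxx ifF //; apply/negbTE; rewrite neq_ltn; lia.
Qed.

Definition ppsucz (p : int) i j base : ppf G :=
  if (0 <= p) then ppsuc (absz p) i j base else ppsuc (absz p) j i base.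

Lemma ppsucz_sem p i j base v : (i < base)%N -> (j < base)%N ->
  (pp_holds v (ppsucz p i j base) <-> sucp p (v i) (v j)).
Proof.
move=> Hi Hj; rewrite /ppsucz; case: ifP => Hp.
- rewrite ppsuc_sem //; last by left.
  by have -> : (absz p)%:Z = p by lia.
- rewrite ppsuc_sem //; last by left.
  rewrite [sucp p _ _]sucp_sym; by have -> : - p = (absz p)%:Z by lia.
Qed.

Fixpoint exs (m base : nat) (phi : ppf G) : ppf G :=
  if m is m'.+1 then PEx (base + m') (exs m' base phi) else phi.

Lemma exs_sem m base phi v :
  pp_holds v (exs m base phi) <->
  exists w, (forall j, (j < base \/ base + m <= j)%N -> w j = v j) /\ pp_holds w phi.
Proof.
elim: m v => [|m IH] v /=.
- split; first by move=> H; exists v.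
  move=> [w [Hw H]]; have -> : v = w; last done.
  apply: functional_extensionality => j; symmetry; apply: Hw; lia.
- split.
  + move=> [a /IH [w [Hw H]]]; exists w; split => // j Hj.
    rewrite Hw; last by lia.
    rewrite /upd ifF //; apply/negbTE; rewrite neq_ltn; lia.
  + move=> [w [Hw H]]; exists (w (base + m)); apply/IH; exists w; split => // j Hj.
    rewrite /upd; case: eqP => [->|Hne] //; apply: Hw; lia.
Qed.

Lemma pins_sem (pin : nat -> ppf G) ks v :
  pp_holds v (foldr (fun k f => PAnd (pin k) f) (PTrue G) ks) <->
  (forall k, k \in ks -> pp_holds v (pin k)).
Proof.
elim: ks => [|k ks IH] /=; first by split.
rewrite IH; split.
- by move=> [H1 H2] k'; rewrite inE => /orP [/eqP ->|/H2].
- by move=> H; split => [|k' Hk']; apply: H; rewrite inE ?eqxx ?Hk' ?orbT.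
Qed.

End PPChain.

Lemma compat (s : seq QZ) (N : nat) (J : rat -> nat) (T : QZ -> QZ) :
  (forall u, u \in s -> (T u).2 = u.2) ->
  (forall u w, u \in s -> w \in s -> (J u.1 == J w.1) = ((T u).1 == (T w).1)) ->
  forall u w, u \in s -> w \in s -> forall p, (absz p <= N)%N ->
  sucp p (T u) (T w) =
  sucp p (0, ((2 * (\sum_(x <- s) absz x.2) + N + 1) * J u.1)%N%:Z + u.2)
         (0, ((2 * (\sum_(x <- s) absz x.2) + N + 1) * J w.1)%N%:Z + w.2).
Proof.
move=> HT2 HJ u w Hu Hw p Hp.
set B := (\sum_(x <- s) absz x.2)%N.
have Bu : (absz u.2 <= B)%N := abs_le_sum (fun x : QZ => x.2) Hu.
have Bw : (absz w.2 <= B)%N := abs_le_sum (fun x : QZ => x.2) Hw.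
case E: (J u.1 == J w.1).
- move: (E); rewrite HJ // => /eqP ET.
  rewrite /sucp /= ET eqxx /= HT2 // HT2 // (eqP E) -addrA.
  by rewrite (inj_eq (@addrI _ _)).
- move: (E); rewrite HJ // => ET.
  rewrite /sucp ET /=; apply/esym/negbTE; rewrite ?eqxx /=.
  have Hne : J u.1 != J w.1 by rewrite E.
  exact: far Hne Bu Bw Hp.
Qed.


Lemma shift_sucp p (A B' : QZ) (c d : int) :
  sucp p (A.1, A.2 + c) (B'.1, B'.2 + d) = sucp (p + c - d) A B'.
Proof.
rewrite /sucp /=; congr andb.
have -> : B'.2 + d == A.2 + c + p = (B'.2 == A.2 + (p + c - d)).
  by apply/idP/idP => /eqP E; apply/eqP; [rewrite -(addrK d B'.2) E | rewrite E]; ring.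
done.
Qed.

Lemma J0_inj (Cs : seq rat) a b : a \in 0 :: Cs -> b \in 0 :: Cs ->
  ((if a == 0 then 0%N else (index a Cs).+1) == (if b == 0 then 0%N else (index b Cs).+1))
  = (a == b).
Proof.
rewrite !inE => Ha Hb.
case Ea: (a == 0); case Eb: (b == 0).
- by rewrite (eqP Ea) (eqP Eb) !eqxx.
- by rewrite /= (eqP Ea) [_ == b]eq_sym Eb.
- by rewrite /= (eqP Eb) Ea.
- move: Ha Hb; rewrite Ea Eb /= => Ha Hb.
  apply/idP/idP => [/eqP [] Ei|/eqP -> //].
  by rewrite -(nth_index 0 Ha) Ei nth_index.
Qed.

Lemma mkseq_ext (f g : nat -> QZ) n : (forall k, (k < n)%N -> f k = g k) -> mkseq f n = mkseq g n.
Proof. by move=> H; rewrite /mkseq; apply/eq_in_map => k; rewrite mem_iota add0n /=; apply: H. Qed.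

Lemma noR_two (G : structure)
  (Hfo : forall i : sym G, fo_definable (arity i) (relof i))
  (Hsuc : exists i : sym G, forall s, relof i s <-> suc_rel s) :
  ~ (exists e : QZ -> QZ, endomorphism G e /\
      exists a b : QZ, ~ same_copy a b /\ same_copy (e a) (e b)) ->
  exists R : QZ -> QZ -> Prop,
        pp_definable2 G R /\ nontrivial2 R /\ infinite_distance_degree R.
Proof.
move=> Hno.
have [isuc Hisuc] := Hsuc.
pose m (x : QZ) : QZ := if x.1 == 1 then (0, x.2) else x.
have Hm : sucendo m.
  move=> a b /andP [/eqP E1 /eqP E2]; rewrite /m -E1.
  by case: (a.1 == 1); rewrite /sucp /= ?E1 ?eqxx /= ?E2 ?eqxx.
have [i [s [Hs Hms]]] : exists (i : sym G) s, relof i s /\ ~ relof i (map m s).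
  apply: NNPP => H; apply: Hno; exists m; split.
  - move=> i s Hs; apply: NNPP => H'; apply: H; by exists i, s.
  - exists (0, 0), (1, 0); rewrite /same_copy /m /=; split; last by []; move=> E.
    by move: (congr1 (fun r : rat => r == 0) E); rewrite eqxx.
set n := arity i.
have [N HN] := rel_local Hfo i.
pose V := nth (0, 0) s.
have Hsize : size s = n := relof_size Hs.
have HVs : forall k, (k < n)%N -> V k \in s by move=> k Hk; rewrite /V mem_nth // Hsize.
have Es : s = mkseq V n by rewrite /V -Hsize mkseq_nth.
pose Cs := map fst s.
pose B := (\sum_(x <- s) absz x.2)%N.
pose M := (2 * B + N + 1)%N.
pose J0 q := if q == 0 then 0%N else (index q Cs).+1.
pose cst (u : QZ) : int := if u.1 == 1 then u.2 else (M * J0 u.1)%N%:Z + u.2.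
pose anc (u : QZ) : nat := if u.1 == 1 then 1%N else 0%N.
pose place (x y : QZ) (u : QZ) : QZ :=
  ((if u.1 == 1 then y else x).1, (if u.1 == 1 then y else x).2 + cst u).
pose R x y := relof i (mkseq (fun k => place x y (V k)) n).
pose J (J1 : nat) q := if q == 1 then J1 else J0 q.
have Hplace : forall J1 u, place (0, 0) (0, (M * J1)%N%:Z) u = (0, (M * J J1 u.1)%N%:Z + u.2).
  move=> J1 u; rewrite /place /cst /J; case: (u.1 == 1) => //=; congr pair; ring.
have HJ0le : forall q, q \in Cs -> (J0 q <= size Cs)%N.
  move=> q Hq; rewrite /J0; case: (q == 0) => //; by rewrite index_mem.
have RC : forall N0, R (0, 0) (0, (M * (size Cs + 2 + N0))%N%:Z).
  move=> N0; set J1 := (size Cs + 2 + N0)%N.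
  rewrite /R; move: Hs; rewrite {1}Es; apply: HN.
  move=> k l; rewrite !mem_iota /= !add0n => Hk Hl p Hp.
  rewrite !Hplace.
  apply: (@compat s N (J J1) id) => //; try exact: HVs.
  move=> u w Hu Hw /=.
  have Hu1 : u.1 \in Cs := map_f fst Hu.
  have Hw1 : w.1 \in Cs := map_f fst Hw.
  rewrite /J; case Eu: (u.1 == 1); case Ew: (w.1 == 1).
  + by rewrite (eqP Eu) (eqP Ew) !eqxx.
  + rewrite (eqP Eu) [1 == _]eq_sym Ew; apply/negbTE/eqP => E.
    by move: (HJ0le _ Hw1); rewrite -E /J1; lia.
  + rewrite (eqP Ew) Eu; apply/negbTE/eqP => E.
    by move: (HJ0le _ Hu1); rewrite E /J1; lia.
  + by rewrite /J0 J0_inj // inE ?Hu1 ?Hw1 orbT.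
have RB : ~ R (0, 0) (0, 0).
  move=> HR; apply: Hms; rewrite Es /mkseq -map_comp.
  have E0 : place (0, 0) (0, 0) = place (0, 0) (0, (M * 0)%N%:Z) by rewrite muln0.
  move: HR; rewrite /R E0.
  apply: HN.
  move=> k l; rewrite !mem_iota /= !add0n => Hk Hl p Hp.
  rewrite !Hplace /=.
  symmetry; apply: (@compat s N (J 0) m) => //; try exact: HVs.
  - by move=> u _; rewrite /m; case: (u.1 == 1).
  - move=> u w Hu Hw.
    have Hu1 : u.1 \in Cs := map_f fst Hu.
    have Hw1 : w.1 \in Cs := map_f fst Hw.
    have HJm : forall x, x \in s -> J 0 x.1 = J0 (m x).1.
      by move=> x _; rewrite /J /m; case: (x.1 == 1).
    rewrite !HJm // /J0 J0_inj //.
    * by rewrite /m; case: (u.1 == 1); rewrite /= ?inE ?eqxx ?Hu1 ?orbT.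
    * by rewrite /m; case: (w.1 == 1); rewrite /= ?inE ?eqxx ?Hw1 ?orbT.
have sel : forall (z : nat -> QZ) u, (if u.1 == 1 then z 1%N else z 0%N) = z (anc u).
  by move=> z u; rewrite /anc; case: (u.1 == 1).
pose C := (\sum_(x <- s) absz (cst x))%N.
have HC : forall k, (k < n)%N -> (absz (cst (V k)) <= C)%N.
  by move=> k Hk; apply: (abs_le_sum cst); apply: HVs.
have Rloc : local 2 (fun s2 => R (nth (0, 0) s2 0) (nth (0, 0) s2 1)).
  exists (N + 2 * C)%N => v w H.
  rewrite /= ?nth_mkseq // /R; apply: HN.
  move=> k l; rewrite !mem_iota /= !add0n => Hk Hl p Hp.
  rewrite /place !shift_sucp !sel; apply: H.
  - by rewrite mem_iota /anc; case: ((V k).1 == 1).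
  - by rewrite mem_iota /anc; case: ((V l).1 == 1).
  - have := HC k Hk; have := HC l Hl; lia.
have Hfo2 : fo_definable2 R.
  have [d Hd] := local_dnf Rloc; exact: dnf_fo_def Hd.
have [NR HNR] := local2_R (fo_local_def Hfo2).
have R01 : R (0, 0) (1, 0).
  apply: (far_diff HNR (RC NR)) => //=.
  have : (1 <= M)%N by rewrite /M addn1.
  move=> HM; nia.
exists R; split; [|split; [split => //|]].
-
  pose pin k := ppsucz isuc (cst (V k)) (anc (V k)) (2 + k) (2 + n).
  pose body := PAnd (PRel i (iota 2 n)) (foldr (fun k f => PAnd (pin k) f) (PTrue G) (iota 0 n)).
  exists (exs n 2 body) => v; rewrite exs_sem.
  have Hanc : forall u, (anc u < 2)%N by move=> u; rewrite /anc; case: (u.1 == 1).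
  have Hiota : forall w : nat -> QZ, map w (iota 2 n) = mkseq (fun k => w (2 + k)%N) n.
    by move=> w; rewrite (iotaDl 2 0) -map_comp.
  split.
  + move=> HR.
    pose w j := if (2 <= j < 2 + n)%N then place (v 0%N) (v 1%N) (V (j - 2)%N) else v j.
    exists w; split.
    * move=> j Hj; rewrite /w ifF //; apply/negbTE; lia.
    * split.
      -- rewrite /= Hiota; move: HR; rewrite /R; congr relof; apply: mkseq_ext => k Hk.
         by rewrite /w ifT ?addKn //; lia.
      -- apply/pins_sem => k; rewrite mem_iota add0n /= => Hk.
         have Ha : (anc (V k) < 2 + n)%N by have := Hanc (V k); lia.
         have Hb : (2 + k < 2 + n)%N by lia.
         rewrite /pin ppsucz_sem //.
         apply/sucp_eq; rewrite /w ifT; last by lia.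
         rewrite ifF; last by apply/negbTE; have := Hanc (V k); lia.
         by rewrite addKn /place sel.
  + move=> [w [Hw [HRel Hpins]]].
    have Hw01 : forall j, (j < 2)%N -> w j = v j by move=> j Hj; apply: Hw; left.
    move: HRel; rewrite /= Hiota /R; congr relof; apply: mkseq_ext => k Hk.
    move/pins_sem: Hpins => /(_ k); rewrite mem_iota add0n /= => /(_ Hk).
    have Ha : (anc (V k) < 2 + n)%N by have := Hanc (V k); lia.
    have Hb : (2 + k < 2 + n)%N by lia.
    rewrite /pin ppsucz_sem //.
    by move/sucp_eq => ->; rewrite Hw01 // /place sel.
-
  move=> [phi Hphi].
  have Hpres := @pp_pres QZsuc m.
  have : pp_holds (val2 (0, 0) (1, 0)) phi by apply/Hphi.
  move/Hpres => /(_ _) H; apply: RB.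
  have := Hphi (m \o val2 (0, 0) (1, 0)); rewrite /= /m /=.
  move=> [_ ]; apply; apply: H.
  move=> [] s' [x [y [-> Hxy]]]; exists (m x), (m y); split => //; exact: Hm.
-
  move=> N0; exists (0, 0), (0, (M * (size Cs + 2 + N0))%N%:Z); split; first exact: RC.
  split => //=.
  have : (1 <= M)%N by rewrite /M addn1.
  move=> HM; nia.
Qed.

End Helpers.

Theorem mainTheorem16 (G : structure)
  (Hfo : forall i : sym G, fo_definable (arity i) (relof i))
  (Hsuc : exists i : sym G, forall s, relof i s <-> suc_rel s) :
  ((forall (i : sym G) (d : dnf),
      dnf_defines (arity i) (relof i) d -> reduced d -> positive d) <->
   (exists e : QZ -> QZ, endomorphism G e /\
      exists a b : QZ, ~ same_copy a b /\ same_copy (e a) (e b))) /\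
  ((exists e : QZ -> QZ, endomorphism G e /\
      exists a b : QZ, ~ same_copy a b /\ same_copy (e a) (e b)) <->
   ~ (exists R : QZ -> QZ -> Prop,
        pp_definable2 G R /\ nontrivial2 R /\ infinite_distance_degree R)).
Proof.
split; split.
- exact: one_two Hfo.
- by move=> H2; apply: P_one; apply: two_P.
- exact: two_noR Hfo Hsuc.
- move=> HnoR; apply: NNPP => H2; apply: HnoR; exact: noR_two Hfo Hsuc H2.
Qed.
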